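(* Let $n\ge4$, let $A_1,\dots,A_n$ be (not necessarily distinct) points in $\mathbb{R}^m$, set $A_{n+1}=A_1$, and for $i\ne j$ let $M_{ij}$ be the midpoint of the segment $A_iA_j$. For $1\le i<j\le n$ let $$c_{ij}=\sum_{r=0}^{2}(-1)^{r+1}\binom{n-j+i-1}{2-r}\binom{j-i-1}{r}.$$ Then $$\binom{n-2}{2}\sum_{i=1}^n|A_iA_{i+1}|^2=\sum_{\substack{1\le i<j\le n\\ 1<j-i<n-1}}c_{ij}|A_iA_j|^2+\sum_{1\le i<j<k<l\le n}4|M_{ik}M_{jl}|^2.$$ For $n=4$ this reduces to $|A_1A_2|^2+|A_2A_3|^2+|A_3A_4|^2+|A_4A_1|^2=|A_1A_3|^2+|A_2A_4|^2+4|M_{13}M_{24}|^2$.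
   Context: $|XY|$ denotes the Euclidean distance in $\mathbb{R}^m$. Binomial coefficients $\binom{a}{b}$ are $0$ when $b>a$ or $b<0$. *)

(* Defs.v *)
From mathcomp Require Import all_boot all_order all_algebra.
Set Implicit Arguments. Unset Strict Implicit. Unset Printing Implicit Defensive.
Import Order.TTheory GRing.Theory Num.Theory.
Local Open Scope ring_scope.

Definition edist (R : rcfType) (m : nat) (X Y : 'rV[R]_m) : R :=
  Num.sqrt (\sum_(k < m) (X ord0 k - Y ord0 k) ^+ 2).

Definition midpoint (R : rcfType) (m : nat) (X Y : 'rV[R]_m) : 'rV[R]_m :=
  (2%:R)^-1 *: (X + Y).

Definition coef_c (R : rcfType) (n i j : nat) : R :=
  \sum_(r < 3) (-1) ^+ r.+1 * ('C(n - j + i - 1, 2 - r))%:R * ('C(j - i - 1, r))%:R.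

Definition cyc_succ (n i : nat) : nat := if i == n then 1%N else i.+1.

(* Main.v *)
Require Import Defs.
From mathcomp Require Import all_boot all_order all_algebra.
From mathcomp Require Import ring zify lra.
Import Order.TTheory GRing.Theory Num.Theory.

Lemma c1 N a : \sum_(0 <= x < N) (a < x) = N - a.+1.
Proof.
elim: N => [|N IH]; first by rewrite big_geq.
rewrite big_nat_recr //= IH; case: (ltnP a N) => h; lia.
Qed.

Lemma c1b N a b : b <= N -> \sum_(0 <= x < N) ((a < x) * (x < b)) = b - a.+1.
Proof.
move=> hb; rewrite (@big_cat_nat _ _ _ b 0 N) // /=.
rewrite [X in _ + X]big1_seq ?addn0; last first.
  move=> i /andP[_]; rewrite mem_iota => /andP[h1 _]; case: (ltnP a i); case: (ltnP i b); lia.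
rewrite -(c1 b a); apply: eq_big_nat => i /andP[_ ->]; by rewrite muln1.
Qed.

Lemma c2 N a b : b <= N ->
  \sum_(0 <= x < N) \sum_(0 <= y < N) ((a < x) * ((x < y) * (y < b))) = 'C(b - a.+1, 2).
Proof.
move=> hb.
transitivity (\sum_(0 <= x < b) (a < x) * (b - x.+1)).
  rewrite (@big_cat_nat _ _ _ b 0 N) // /=.
  rewrite [X in _ + X]big1_seq ?addn0; last first.
    move=> i /andP[_]; rewrite mem_iota => /andP[h1 _].
    apply: big1 => j _; case: (ltnP i j) => h; case: (ltnP j b) => h'; lia.
  apply: eq_big_nat => i _; by rewrite -big_distrr /= c1b.
elim: b hb => [|b IH] hb; first by rewrite big_geq.
rewrite big_nat_recr //= subnn muln0 addn0.
have -> : \sum_(0 <= x < b) (a < x) * (b.+1 - x.+1)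
   = \sum_(0 <= x < b) (a < x) * (b - x.+1) + \sum_(0 <= x < b) (a < x).
  rewrite -big_split /=; apply: eq_big_nat => i /andP[_ hi].
  rewrite -mulnSr; congr (_ * _); lia.
rewrite IH ?(ltnW hb) // c1.
case: (ltnP a b) => h.
  have -> : b.+1 - a.+1 = (b - a.+1).+1 by lia.
  by rewrite binS bin1.
have -> : b.+1 - a.+1 = 0 by lia.
have -> : b - a.+1 = 0 by lia.
by [].
Qed.

Lemma C2D x y : 'C(x + y, 2) = 'C(x, 2) + 'C(y, 2) + x * y.
Proof.
elim: y => [|y IH]; first by rewrite bin0n muln0 !addn0.
rewrite addnS !binS IH !bin1 mulnS. lia.
Qed.

Lemma delta_nat (R : nzSemiRingType) N b (G : nat -> R) :
  (\sum_(0 <= y < N) ((y == b)%:R * G y) = (b < N)%:R * G b)%R.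
Proof.
elim: N => [|N IH]; first by rewrite big_geq // mul0r.
rewrite big_nat_recr //= IH.
case: (ltngtP b N) => h.
- by rewrite (_ : b < N.+1) ?mul0r ?addr0 //; lia.
- by rewrite (_ : (b < N.+1) = false) ?mul0r ?addr0 //; lia.
- by subst; rewrite ltnSn !mul0r add0r.
Qed.

Section Gen.
Variable R : comNzRingType.
Local Open Scope ring_scope.

Lemma widen a N (G : nat -> R) :
  \sum_(a <= i < N) G i = \sum_(0 <= i < N) (a <= i)%:R * G i.
Proof.
case: (leqP a N) => h.
  rewrite (@big_cat_nat _ _ _ a 0 N) //= [X in X + _]big1_seq ?add0r; last first.
    by move=> i /andP[_]; rewrite mem_iota => /andP[_ hi]; rewrite (_ : (a <= i)%N = false) ?mul0r //; lia.
  by apply: eq_big_nat => i /andP[-> _]; rewrite mul1r.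
rewrite big_geq ?(ltnW h) // big1_seq // => i /andP[_]; rewrite mem_iota => /andP[_ hi].
by rewrite (_ : (a <= i)%N = false) ?mul0r //; lia.
Qed.

Definition Ind (i j k l : nat) : nat := (0 < i) * ((i < j) * ((j < k) * (k < l))).

Definition Q4 N (F : nat -> nat -> nat -> nat -> R) :=
  \sum_(0 <= i < N) \sum_(0 <= j < N) \sum_(0 <= k < N) \sum_(0 <= l < N) F i j k l.

Lemma quad_full N F :
  \sum_(1 <= i < N) \sum_(i.+1 <= j < N) \sum_(j.+1 <= k < N) \sum_(k.+1 <= l < N) F i j k l
  = Q4 N (fun i j k l => (Ind i j k l)%:R * F i j k l).
Proof.
rewrite /Q4 [in LHS]widen; apply: eq_bigr => i _.
rewrite [in LHS]widen mulr_sumr; apply: eq_bigr => j _.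
rewrite [in LHS]widen !mulr_sumr; apply: eq_bigr => k _.
rewrite [in LHS]widen !mulr_sumr; apply: eq_bigr => l _.
rewrite /Ind !natrM; ring.
Qed.

Lemma pair_full N (P : nat -> nat -> bool) (G : nat -> nat -> R) :
  \sum_(1 <= i < N) \sum_(i.+1 <= j < N | P i j) G i j
  = \sum_(0 <= i < N) \sum_(0 <= j < N) ((0 < i) * (i < j))%N%:R * ((P i j)%:R * G i j).
Proof.
rewrite [in LHS]widen; apply: eq_bigr => i _.
rewrite big_mkcond [in LHS]widen mulr_sumr; apply: eq_bigr => j _.
by case: (P i j); rewrite natrM ?mul1r ?mul0r ?mulr0 ?mulrA.
Qed.

Lemma Q4_add N F G : Q4 N F + Q4 N G = Q4 N (fun i j k l => F i j k l + G i j k l).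
Proof.
rewrite /Q4 -big_split; apply: eq_bigr => i _; rewrite -big_split; apply: eq_bigr => j _.
rewrite -big_split; apply: eq_bigr => k _; rewrite -big_split //.
Qed.

Lemma Q4_opp N F : - Q4 N F = Q4 N (fun i j k l => - F i j k l).
Proof.
rewrite /Q4 -sumrN; apply: eq_bigr => i _; rewrite -sumrN; apply: eq_bigr => j _.
rewrite -sumrN; apply: eq_bigr => k _; rewrite -sumrN //.
Qed.

Definition P2 N (G : nat -> nat -> R) := \sum_(0 <= i < N) \sum_(0 <= j < N) G i j.

Lemma P2_add N F G : P2 N F + P2 N G = P2 N (fun i j => F i j + G i j).
Proof. by rewrite /P2 -big_split; apply: eq_bigr => i _; rewrite -big_split. Qed.

Lemma P2_opp N F : - P2 N F = P2 N (fun i j => - F i j).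
Proof. by rewrite /P2 -sumrN; apply: eq_bigr => i _; rewrite -sumrN. Qed.

End Gen.
Arguments Q4 {R}. Arguments P2 {R}. Arguments Ind : clear implicits.

Lemma c2top N a : \sum_(0 <= x < N) \sum_(0 <= y < N) ((a < x) * (x < y)) = 'C(N - a.+1, 2).
Proof.
rewrite -(@c2 N a N (leqnn N)); apply: eq_big_nat => x _; apply: eq_big_nat => y /andP[_ hy].
by rewrite hy muln1.
Qed.

Lemma sep N (f g : nat -> nat) :
  \sum_(0 <= x < N) \sum_(0 <= y < N) (f x * g y) = (\sum_(0 <= x < N) f x) * (\sum_(0 <= y < N) g y).
Proof. by rewrite big_distrl; apply: eq_bigr => x _; rewrite big_distrr. Qed.

Section Gen2.
Variable R : comNzRingType.
Local Open Scope ring_scope.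

Lemma pull2 N (f : nat -> nat -> nat) (c : R) :
  \sum_(0 <= u < N) \sum_(0 <= v < N) (f u v)%:R * c = (\sum_(0 <= u < N) \sum_(0 <= v < N) f u v)%:R * c.
Proof. rewrite natr_sum mulr_suml; apply: eq_bigr => u _; by rewrite natr_sum mulr_suml. Qed.

Implicit Types F : nat -> nat -> nat -> nat -> R.

Lemma perm_il N F : Q4 N F =
  \sum_(0 <= i < N) \sum_(0 <= l < N) \sum_(0 <= j < N) \sum_(0 <= k < N) F i j k l.
Proof.
rewrite /Q4; apply: eq_bigr => i _.
under eq_bigr do rewrite exchange_big_nat.
by rewrite exchange_big_nat.
Qed.

Lemma perm_ik N F : Q4 N F =
  \sum_(0 <= i < N) \sum_(0 <= k < N) \sum_(0 <= j < N) \sum_(0 <= l < N) F i j k l.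
Proof. by rewrite /Q4; apply: eq_bigr => i _; rewrite exchange_big_nat. Qed.

Lemma perm_jk N F : Q4 N F =
  \sum_(0 <= j < N) \sum_(0 <= k < N) \sum_(0 <= i < N) \sum_(0 <= l < N) F i j k l.
Proof.
rewrite /Q4 exchange_big_nat; apply: eq_bigr => j _.
by rewrite exchange_big_nat.
Qed.

Lemma perm_kl N F : Q4 N F =
  \sum_(0 <= k < N) \sum_(0 <= l < N) \sum_(0 <= i < N) \sum_(0 <= j < N) F i j k l.
Proof.
rewrite perm_ik.
transitivity (\sum_(0 <= i < N) \sum_(0 <= k < N) \sum_(0 <= l < N) \sum_(0 <= j < N) F i j k l).
  apply: eq_bigr => i _; apply: eq_bigr => k _; by rewrite exchange_big_nat.
rewrite exchange_big_nat; apply: eq_bigr => k _; by rewrite exchange_big_nat.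
Qed.

Lemma perm_jl N F : Q4 N F =
  \sum_(0 <= j < N) \sum_(0 <= l < N) \sum_(0 <= k < N) \sum_(0 <= i < N) F i j k l.
Proof.
rewrite perm_jk.
transitivity (\sum_(0 <= j < N) \sum_(0 <= k < N) \sum_(0 <= l < N) \sum_(0 <= i < N) F i j k l).
  apply: eq_bigr => j _; apply: eq_bigr => k _; by rewrite exchange_big_nat.
apply: eq_bigr => j _; by rewrite exchange_big_nat.
Qed.

Variable n : nat.
Variable D : nat -> nat -> R.

Lemma T1 : Q4 n.+1 (fun i j k l => (Ind i j k l)%:R * D i j)
  = P2 n.+1 (fun x y => ((0 < x) * ((x < y) * 'C(n - y, 2)))%N%:R * D x y).
Proof.
apply: eq_bigr => x _; apply: eq_bigr => y _; rewrite pull2; congr (_%:R * _).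
rewrite /Ind. under eq_bigr do rewrite -big_distrr /=. rewrite -big_distrr /=; congr (_ * _).
under eq_bigr do rewrite -big_distrr /=. rewrite -big_distrr /=; congr (_ * _).
by rewrite c2top subSS.
Qed.

Lemma T2 : Q4 n.+1 (fun i j k l => (Ind i j k l)%:R * D i l)
  = P2 n.+1 (fun x y => ((0 < x) * 'C(y - x.+1, 2))%N%:R * D x y).
Proof.
rewrite perm_il; apply: eq_bigr => x _; apply: eq_big_nat => y /andP[_ hy].
rewrite pull2; congr (_%:R * _).
rewrite /Ind. under eq_bigr do rewrite -big_distrr /=. rewrite -big_distrr /=; congr (_ * _).
by rewrite c2 // ltnW.
Qed.

Lemma T3 : Q4 n.+1 (fun i j k l => (Ind i j k l)%:R * D j k)
  = P2 n.+1 (fun x y => ((x < y) * ((x - 1) * (n - y)))%N%:R * D x y).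
Proof.
rewrite perm_jk; apply: eq_big_nat => x /andP[_ hx]; apply: eq_big_nat => y /andP[_ hy].
rewrite pull2; congr (_%:R * _).
transitivity ((\sum_(0 <= i < n.+1) \sum_(0 <= l < n.+1) (((0 < i) * (i < x)) * ((x < y) * (y < l))))%N).
  apply: eq_bigr => i _; apply: eq_bigr => l _; by rewrite /Ind mulnA.
by rewrite sep (c1b _ _ _ (ltnW hx)) -big_distrr /= c1 subSS mulnCA.
Qed.

Lemma T4 : Q4 n.+1 (fun i j k l => (Ind i j k l)%:R * D k l)
  = P2 n.+1 (fun x y => ((x < y) * 'C(x - 1, 2))%N%:R * D x y).
Proof.
rewrite perm_kl; apply: eq_big_nat => x /andP[_ hx]; apply: eq_big_nat => y /andP[_ hy].
rewrite pull2; congr (_%:R * _).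
transitivity ((\sum_(0 <= i < n.+1) \sum_(0 <= j < n.+1) ((x < y) * ((0 < i) * ((i < j) * (j < x)))))%N).
  apply: eq_bigr => i _; apply: eq_bigr => j _; by rewrite /Ind [RHS]mulnC -!mulnA.
under eq_bigr do rewrite -big_distrr /=. rewrite -big_distrr /=; congr (_ * _).
by rewrite c2 // ltnW.
Qed.

Lemma T5 : Q4 n.+1 (fun i j k l => (Ind i j k l)%:R * D i k)
  = P2 n.+1 (fun x y => ((0 < x) * ((y - x.+1) * (n - y)))%N%:R * D x y).
Proof.
rewrite perm_ik; apply: eq_big_nat => x /andP[_ hx]; apply: eq_big_nat => y /andP[_ hy].
rewrite pull2; congr (_%:R * _).
transitivity ((\sum_(0 <= j < n.+1) \sum_(0 <= l < n.+1) (((0 < x) * ((x < j) * (j < y))) * (y < l)))%N).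
  apply: eq_bigr => i _; apply: eq_bigr => l _; by rewrite /Ind -!mulnA.
by rewrite sep -big_distrr /= (c1b _ _ _ (ltnW hy)) c1 subSS mulnA.
Qed.

Lemma T6 : Q4 n.+1 (fun i j k l => (Ind i j k l)%:R * D j l)
  = P2 n.+1 (fun x y => ((x - 1) * (y - x.+1))%N%:R * D x y).
Proof.
rewrite perm_jl; apply: eq_big_nat => x /andP[_ hx]; apply: eq_big_nat => y /andP[_ hy].
rewrite pull2; congr (_%:R * _).
transitivity ((\sum_(0 <= k < n.+1) \sum_(0 <= i < n.+1) (((x < k) * (k < y)) * ((0 < i) * (i < x))))%N).
  apply: eq_bigr => i _; apply: eq_bigr => l _; by rewrite /Ind mulnA mulnC.
by rewrite sep (c1b _ _ _ (ltnW hy)) (c1b _ _ _ (ltnW hx)) mulnC.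
Qed.

End Gen2.

Section Geo.
Variable R : rcfType.
Variable m : nat.
Local Open Scope ring_scope.
Implicit Types X Y Z W : 'rV[R]_m.

Lemma edist2 X Y : edist X Y ^+ 2 = \sum_(k < m) (X ord0 k - Y ord0 k) ^+ 2.
Proof. by rewrite /edist sqr_sqrtr // sumr_ge0 // => k _; rewrite sqr_ge0. Qed.

Lemma edist_sym X Y : edist X Y = edist Y X.
Proof. by rewrite /edist; congr Num.sqrt; apply: eq_bigr => k _; rewrite -sqrrN opprB. Qed.

Lemma midpt X Y Z W :
  4%:R * edist (midpoint X Z) (midpoint Y W) ^+ 2 =
  edist X Y ^+ 2 + edist X W ^+ 2 + edist Y Z ^+ 2 + edist Z W ^+ 2
  - edist X Z ^+ 2 - edist Y W ^+ 2.
Proof.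
rewrite !edist2 /midpoint mulr_sumr -!big_split -!sumrB /=; apply: eq_bigr => k _.
rewrite !mxE.
have h2 : (2%:R : R) != 0 by rewrite pnatr_eq0.
by field.
Qed.

End Geo.

Lemma coefK (R : rcfType) n x y : 4 <= n -> x < n.+1 -> y < n.+1 ->
 (('C(n - 2, 2))%:R * (((0 < x) * (x < y)) * ((y == x.+1) + (x == 1) * (y == n)))%N%:R
 = ((0 < x) * (x < y))%N%:R * ((1 < y - x < n - 1)%N%:R * coef_c R n x y)
   + ((0 < x) * ((x < y) * 'C(n - y, 2)))%N%:R + ((0 < x) * 'C(y - x.+1, 2))%N%:R
   + ((x < y) * ((x - 1) * (n - y)))%N%:R + ((x < y) * 'C(x - 1, 2))%N%:R
   - ((0 < x) * ((y - x.+1) * (n - y)))%N%:R - ((x - 1) * (y - x.+1))%N%:R)%R.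
Proof.
move=> hn hx hy.
have [nd|nd] := boolP ((0 < x) && (x < y)); last first.
  rewrite (_ : ((0 < x) * (x < y))%N = 0); last lia.
  rewrite (_ : ((0 < x) * ((x < y) * 'C(n - y, 2)))%N = 0); last nia.
  rewrite (_ : ((0 < x) * 'C(y - x.+1, 2))%N = 0); last first.
    case/nandP: nd => h; first by rewrite (negbTE h).
    by rewrite (_ : y - x.+1 = 0) ?muln0 //; lia.
  rewrite (_ : ((x < y) * ((x - 1) * (n - y)))%N = 0); last nia.
  rewrite (_ : ((x < y) * 'C(x - 1, 2))%N = 0); last first.
    case/nandP: nd => h; last by rewrite (negbTE h).
    by rewrite (_ : x - 1 = 0) ?muln0 //; lia.
  rewrite (_ : ((0 < x) * ((y - x.+1) * (n - y)))%N = 0); last nia.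
  rewrite (_ : ((x - 1) * (y - x.+1))%N = 0); last nia.
  rewrite !mul0n; ring.
case/andP: nd => x0 xy.
have [p [a [q [hp ha hq]]]] : exists p a q, [/\ x = p.+1, y = p + a + 2 & n = p + a + q + 2].
  by exists (x - 1), (y - x.+1), (n - y); split; lia.
rewrite (_ : n - 2 = p + a + q); last lia.
rewrite (_ : n - y = q); last lia.
rewrite (_ : y - x.+1 = a); last lia.
rewrite (_ : x - 1 = p); last lia.
rewrite x0 xy /coef_c !big_ord_recr big_ord0 /=.
rewrite (_ : n - y + x - 1 = p + q); last lia.
rewrite (_ : y - x - 1 = a); last lia.
rewrite !mul1n subn0 (_ : 2 - 1 = 1) // (_ : 2 - 2 = 0) // !bin0 !bin1 !C2D.
have [a0|a0] := eqVneq a 0.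
  rewrite (_ : ((y == x.+1) + (x == 1%N) * (y == n))%N = 1); last lia.
  rewrite (_ : nat_of_bool (1 < y - x < n - 1) = 0%N); last lia.
  rewrite a0 (_ : 'C(0, 2) = 0%N) // !natrD !natrM; ring.
have [pq|pq] := eqVneq (p + q) 0.
  rewrite (_ : ((y == x.+1) + (x == 1%N) * (y == n))%N = 1); last lia.
  rewrite (_ : nat_of_bool (1 < y - x < n - 1) = 0%N); last lia.
  rewrite (_ : p = 0); last lia. rewrite (_ : q = 0); last lia.
  rewrite (_ : 'C(0, 2) = 0%N) // !natrD !natrM; ring.
rewrite (_ : ((y == x.+1) + (x == 1%N) * (y == n))%N = 0); last lia.
rewrite (_ : nat_of_bool (1 < y - x < n - 1) = 1%N); last lia.
rewrite !natrD !natrM; ring.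
Qed.

Section Edges.
Variable R : comNzRingType.
Local Open Scope ring_scope.

Lemma B1 (b : bool) : b -> (b%:R : R) = 1. Proof. by case: b. Qed.
Lemma B0 (b : bool) : ~~ b -> (b%:R : R) = 0. Proof. by case: b. Qed.

Lemma pair_fullP N (P : nat -> nat -> bool) (G : nat -> nat -> R) :
  \sum_(1 <= i < N) \sum_(i.+1 <= j < N | P i j) G i j
  = P2 N (fun i j => ((0 < i) * (i < j))%N%:R * ((P i j)%:R * G i j)).
Proof. exact: pair_full. Qed.

Lemma P2_scale N c (F : nat -> nat -> R) : c * P2 N F = P2 N (fun i j => c * F i j).
Proof. by rewrite /P2 mulr_sumr; apply: eq_bigr => i _; rewrite mulr_sumr. Qed.

Lemma edges n (D : nat -> nat -> R) : (2 <= n)%N -> (forall a b, D a b = D b a) ->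
  \sum_(1 <= i < n.+1) D i (cyc_succ n i)
  = P2 n.+1 (fun x y => (((0 < x) * (x < y)) * ((y == x.+1) + (x == 1) * (y == n)))%N%:R * D x y).
Proof.
move=> hn Ds.
transitivity (P2 n.+1 (fun x y => (((0 < x) * (x < y)) * (y == x.+1))%N%:R * D x y)
  + P2 n.+1 (fun x y => (((0 < x) * (x < y)) * ((x == 1) * (y == n)))%N%:R * D x y)); last first.
  rewrite P2_add; apply: eq_bigr => x _; apply: eq_bigr => y _.
  by rewrite mulnDr natrD mulrDl.
rewrite big_nat_recr; last by apply: leq_trans hn.
rewrite /cyc_succ eqxx; congr (_ + _).
  rewrite /P2.
  transitivity (\sum_(0 <= x < n.+1) (x.+1 < n.+1)%:R * (((0 < x) * (x < x.+1))%N%:R * D x x.+1)); last first.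
    apply: eq_bigr => x _; symmetry.
    rewrite (eq_bigr (fun y => (y == x.+1)%:R * (((0 < x) * (x < y))%N%:R * D x y))); first exact: delta_nat.
    by move=> y _; rewrite !natrM; ring.
  rewrite [RHS]big_nat_recr //= (B0 _ (negbT (ltnn _))) mul0r addr0 [LHS]widen.
  apply: eq_big_nat => x /andP[_ hx].
  rewrite (_ : x == n = false); last by apply/eqP; lia.
  by rewrite ltnSn muln1 (B1 _ (hx : (x.+1 < n.+1)%N)) mul1r.
rewrite Ds /P2.
transitivity (\sum_(0 <= x < n.+1) (n < n.+1)%:R * ((((0 < x) * (x < n)) * (x == 1))%N%:R * D x n)); last first.
  apply: eq_bigr => x _; symmetry.
  rewrite (eq_bigr (fun y => (y == n)%:R * ((((0 < x) * (x < y)) * (x == 1))%N%:R * D x y))); first exact: delta_nat.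
  by move=> y _; rewrite !natrM; ring.
symmetry.
rewrite (eq_bigr (fun x => (x == 1)%:R * (((n < n.+1) * ((0 < x) * (x < n)))%N%:R * D x n))); last first.
  by move=> x _; rewrite !natrM; ring.
rewrite delta_nat (B1 _ (_ : (1 < n.+1)%N)); last exact: ltnW hn.
rewrite (_ : ((n < n.+1) * ((0 < 1) * (1 < n)))%N = 1%N); last by rewrite ltnSn hn.
by rewrite mulr1n !mul1r.
Qed.

End Edges.

Local Open Scope ring_scope.

Theorem corollary3p4 (R : rcfType) (m n : nat) (A : nat -> 'rV[R]_m) :
  (4 <= n)%N ->
  ('C(n - 2, 2))%:R * \sum_(1 <= i < n.+1) edist (A i) (A (cyc_succ n i)) ^+ 2
  = \sum_(1 <= i < n.+1) \sum_(i.+1 <= j < n.+1 | (1 < j - i < n - 1)%N)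
        coef_c R n i j * edist (A i) (A j) ^+ 2
    + \sum_(1 <= i < n.+1) \sum_(i.+1 <= j < n.+1) \sum_(j.+1 <= k < n.+1)
        \sum_(k.+1 <= l < n.+1)
        4%:R * edist (midpoint (A i) (A k)) (midpoint (A j) (A l)) ^+ 2.
Proof.
move=> hn.
pose D := fun p q => edist (A p) (A q) ^+ 2.
have E : \sum_(1 <= i < n.+1) edist (A i) (A (cyc_succ n i)) ^+ 2
  = P2 n.+1 (fun x y => (((0 < x) * (x < y)) * ((y == x.+1) + (x == 1) * (y == n)))%N%:R * D x y).
  apply: (@edges _ n D); first by apply: leq_trans hn.
  by move=> a b; rewrite /D edist_sym.
rewrite E quad_full.
have -> : Q4 n.+1 (fun i j k l => (Ind i j k l)%:R
      * (4%:R * edist (midpoint (A i) (A k)) (midpoint (A j) (A l)) ^+ 2))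
  = Q4 n.+1 (fun i j k l => (Ind i j k l)%:R * D i j)
  + Q4 n.+1 (fun i j k l => (Ind i j k l)%:R * D i l)
  + Q4 n.+1 (fun i j k l => (Ind i j k l)%:R * D j k)
  + Q4 n.+1 (fun i j k l => (Ind i j k l)%:R * D k l)
  - Q4 n.+1 (fun i j k l => (Ind i j k l)%:R * D i k)
  - Q4 n.+1 (fun i j k l => (Ind i j k l)%:R * D j l).
  rewrite !Q4_opp !Q4_add /Q4; apply: eq_bigr => i _; apply: eq_bigr => j _.
  apply: eq_bigr => k _; apply: eq_bigr => l _.
  rewrite midpt /D; ring.
rewrite (T1 _ n D) (T2 _ n D) (T3 _ n D) (T4 _ n D) (T5 _ n D) (T6 _ n D).
rewrite (pair_fullP _ _ (fun i j => (1 < j - i < n - 1)%N) (fun i j => coef_c R n i j * D i j)).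
rewrite P2_scale !P2_opp !P2_add.
apply: eq_big_nat => x /andP[_ hx]; apply: eq_big_nat => y /andP[_ hy].
have K := @coefK R n x y hn hx hy.
transitivity (('C(n - 2, 2))%:R * (((0 < x) * (x < y)) * ((y == x.+1) + (x == 1) * (y == n)))%N%:R * D x y); first ring.
by rewrite K; ring.
Qed.
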